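(* The class of I$^2$-GNNs can count $3$-paths and $4$-paths at node level: for $L\in\{3,4\}$ and all node-graph pairs $(i_1,G_1),(i_2,G_2)$ with $C(L\text{-path},i_1,G_1)\ne C(L\text{-path},i_2,G_2)$, there exists an I$^2$-GNN whose node representations satisfy $h_{i_1}(G_1)\ne h_{i_2}(G_2)$.
   Context: Graphs are finite, simple, undirected, $G=(V,E)$, possibly carrying node attributes $x_v$ and edge attributes $e_{u,v}$ (a fixed constant when absent). $N(v)$ is the neighbour set of $v$. For $L\ge1$, an $L$-path is a sequence of edges $(v_1,v_2),\dots,(v_L,v_{L+1})$ with $v_1,\dots,v_{L+1}$ pairwise distinct; two paths are identified when their edge sets coincide; $C(L\text{-path},i,G)$ is the number of inequivalent $L$-paths starting from $i$ (i.e. with $v_1=i$). A class $\mathcal F$ of functions on node-graph pairs can count $S$ at node level if for all $(i_1,G_1),(i_2,G_2)$ with $C(S,i_1,G_1)\ne C(S,i_2,G_2)$ there is $f\in\mathcal F$ with $f(i_1,G_1)\ne f(i_2,G_2)$. I$^2$-GNNs. An I$^2$-GNN is specified by an integer $K\ge1$, $T$, arbitrary functions $M_t$ (values in some $\mathbb R^{d_t}$), $U_t$, and arbitrary readouts $R_{\text{edge}},R_{\text{node}}$ on finite multisets. For each root $i\in V$ let $(V_i,E_i)$ be the subgraph of $G$ induced by nodes at shortest-path distance at most $K$ from $i$, and $N_i(k)=\{l\in V_i:(k,l)\in E_i\}$. For each $j\in N(i)$ and $k\in V_i$: $h^{(0)}_{i,j,k}=x_k\oplus\mathbb 1_{k=i}\oplus\mathbb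 1_{k=j}$, $h^{(t+1)}_{i,j,k}=U_t\big(h^{(t)}_{i,j,k},\sum_{l\in N_i(k)}M_t(h^{(t)}_{i,j,k},h^{(t)}_{i,j,l},e_{k,l})\big)$; then $h_{i,j}=R_{\text{edge}}(\{\!\{h^{(T)}_{i,j,k}:k\in V_i\}\!\})$ and $h_i=R_{\text{node}}(\{\!\{h_{i,j}:j\in N(i)\}\!\})$. The node-level function computed is $(i,G)\mapsto h_i$; the class of I$^2$-GNNs consists of all such choices. *)

(* Defs.v *)
From HB Require Import structures.
From mathcomp Require Import all_boot all_order all_algebra.
From mathcomp Require Import reals.
Set Implicit Arguments. Unset Strict Implicit. Unset Printing Implicit Defensive.
Import Order.TTheory GRing.Theory Num.Theory.
Local Open Scope ring_scope.

Record graph (R : realType) (dx de : nat) := Graph {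
  gV :> finType;
  gadj : rel gV;
  gadj_sym : symmetric gadj;
  gadj_irr : irreflexive gadj;
  gx : gV -> 'rV[R]_dx;
  ge : gV -> gV -> 'rV[R]_de;
  ge_sym : forall u v, ge u v = ge v u
}.

Section Defs.
Variables (R : realType) (dx de : nat).

Definition nbr (G : graph R dx de) (v : G) : {set G} := [set u | gadj v u].

Fixpoint ball (G : graph R dx de) (i : G) (n : nat) : {set G} :=
  match n with
  | 0 => [set i]
  | n'.+1 => ball i n' :|: [set u | [exists w in ball i n', gadj w u]]
  end.

Definition is_Lpath (G : graph R dx de) (L : nat) (i : G) (p : L.+1.-tuple G) :=
  [&& uniq p, tnth p ord0 == i &
      [forall k : 'I_L, gadj (tnth p (widen_ord (leqnSn L) k)) (tnth p (lift ord0 k))]].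

Definition path_edges (G : graph R dx de) (L : nat) (p : L.+1.-tuple G) : {set {set G}} :=
  [set [set tnth p (widen_ord (leqnSn L) k); tnth p (lift ord0 k)] | k : 'I_L].

(* number of inequivalent L-paths starting from i (paths identified when their
   edge sets coincide) *)
Definition Lpath_count (L : nat) (G : graph R dx de) (i : G) : nat :=
  #|[set path_edges p | p : L.+1.-tuple G & is_Lpath i p]|.

(* readout on finite multisets: a function on sequences invariant under permutation *)
Definition multiset_fun (A B : eqType) (f : seq A -> B) :=
  forall s1 s2, perm_eq s1 s2 -> f s1 = f s2.

Record I2GNN := MkI2GNN {
  nK : nat;
  nK_ge1 : (1 <= nK)%N;
  nT : nat;
  dh : nat -> nat;     (* dimension of h^{(t+1)} is dh t *)
  dm : nat -> nat;
  dE : nat;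
  dN : nat;
  Mfun : forall t : nat,
    'rV[R]_(match t with 0 => (dx + 1 + 1)%N | t'.+1 => dh t' end) ->
    'rV[R]_(match t with 0 => (dx + 1 + 1)%N | t'.+1 => dh t' end) ->
    'rV[R]_de -> 'rV[R]_(dm t);
  Ufun : forall t : nat,
    'rV[R]_(match t with 0 => (dx + 1 + 1)%N | t'.+1 => dh t' end) ->
    'rV[R]_(dm t) -> 'rV[R]_(dh t);
  Redge : seq 'rV[R]_(match nT with 0 => (dx + 1 + 1)%N | t'.+1 => dh t' end) -> 'rV[R]_dE;
  Redge_ms : multiset_fun Redge;
  Rnode : seq 'rV[R]_dE -> 'rV[R]_dN;
  Rnode_ms : multiset_fun Rnode
}.

Definition hdim (N : I2GNN) (t : nat) : nat :=
  match t with 0 => (dx + 1 + 1)%N | t'.+1 => dh N t' end.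

Definition bool_row (b : bool) : 'rV[R]_1 := const_mx (b%:R).

Section Run.
Variables (N : I2GNN) (G : graph R dx de) (i j : G).

Definition Vi : {set G} := ball i (nK N).
Definition Ni (k : G) : {set G} := [set l in Vi | (k \in Vi) && gadj k l].

Fixpoint hnode (t : nat) : G -> 'rV[R]_(hdim N t) :=
  match t as t0 return G -> 'rV[R]_(hdim N t0) with
  | 0 => fun k => row_mx (row_mx (gx k) (bool_row (k == i))) (bool_row (k == j))
  | t'.+1 => fun k =>
      @Ufun N t' (hnode t' k) (\sum_(l in Ni k) @Mfun N t' (hnode t' k) (hnode t' l) (ge k l))
  end.

Definition hedge : 'rV[R]_(dE N) :=
  @Redge N [seq hnode (nT N) k | k <- enum Vi].
End Run.

Definition I2GNN_out (N : I2GNN) (G : graph R dx de) (i : G) : 'rV[R]_(dN N) :=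
  @Rnode N [seq hedge N i j | j <- enum (nbr i)].

End Defs.

(* Main.v *)
Require Import Defs.
From HB Require Import structures.
From mathcomp Require Import all_boot all_order all_algebra.
From mathcomp Require Import reals.
From mathcomp Require Import zify.
Set Implicit Arguments. Unset Strict Implicit. Unset Printing Implicit Defensive.
Module P1.

Import Order.TTheory GRing.Theory Num.Theory.
Local Open Scope ring_scope.

Section Net.
Variables (R : realType) (dx de : nat).

Definition getc n (v : 'rV[R]_n) (c : nat) : R :=
  oapp (fun o : 'I_n => v 0 o) 0 (insub c).

Definition mk4 (a b c d : R) : 'rV[R]_4 := \row_(x < 4) nth 0 [:: a; b; c; d] x.

Lemma getc_mk4 a b c d x : (x < 4)%N -> getc (mk4 a b c d) x = nth 0 [:: a; b; c; d] x.
Proof. by rewrite /getc; case: insubP => [o _ <- | /negP//] _ /=; rewrite mxE. Qed.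

Lemma getc_sum n (I : finType) (A : {pred I}) (F : I -> 'rV[R]_n) c :
  getc (\sum_(l in A) F l) c = \sum_(l in A) getc (F l) c.
Proof.
rewrite /getc; case: insubP => [o _ _ | _] /=; first by rewrite summxE.
by rewrite big1.
Qed.

Lemma getc_h0a (x : 'rV[R]_dx) (a b : bool) :
  getc (row_mx (row_mx x (bool_row R a)) (bool_row R b)) dx = a%:R.
Proof.
rewrite /getc; case: insubP => [o _ Ho | ]; last by move=> /negP[]; lia.
have -> : o = lshift 1 (rshift dx (ord0 : 'I_1)) by apply: val_inj; rewrite Ho /= addn0.
by rewrite /= row_mxEl row_mxEr mxE.
Qed.

Lemma getc_h0b (x : 'rV[R]_dx) (a b : bool) :
  getc (row_mx (row_mx x (bool_row R a)) (bool_row R b)) (dx + 1) = b%:R.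
Proof.
rewrite /getc; case: insubP => [o _ Ho | ]; last by move=> /negP[]; lia.
have -> : o = rshift (dx + 1) (ord0 : 'I_1) by apply: val_inj; rewrite Ho /= addn0.
by rewrite /= row_mxEr mxE.
Qed.

Definition Mf (t : nat) :
  'rV[R]_(match t with 0 => (dx + 1 + 1)%N | t'.+1 => 4%N end) ->
  'rV[R]_(match t with 0 => (dx + 1 + 1)%N | t'.+1 => 4%N end) ->
  'rV[R]_de -> 'rV[R]_4 :=
  match t as t0 return
    'rV[R]_(match t0 with 0 => (dx + 1 + 1)%N | t'.+1 => 4%N end) ->
    'rV[R]_(match t0 with 0 => (dx + 1 + 1)%N | t'.+1 => 4%N end) ->
    'rV[R]_de -> 'rV[R]_4 with
  | 0 => fun hk hl _ => mk4 0 0 (getc hl (dx + 1))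
           (((getc hl dx == 0) && (getc hl (dx + 1) == 0))%:R)
  | 1 => fun hk hl _ => mk4 0 0 0
           (((getc hl 0 == 0) && (getc hl 1 == 0))%:R *
            (getc hl 3 - ((getc hk 0 == 0) && (getc hk 1 == 0))%:R))
  | _ => fun _ _ _ => 0
  end.

Definition Uf (t : nat) :
  'rV[R]_(match t with 0 => (dx + 1 + 1)%N | t'.+1 => 4%N end) ->
  'rV[R]_4 -> 'rV[R]_4 :=
  match t as t0 return
    'rV[R]_(match t0 with 0 => (dx + 1 + 1)%N | t'.+1 => 4%N end) ->
    'rV[R]_4 -> 'rV[R]_4 with
  | 0 => fun h m => mk4 (getc h dx) (getc h (dx + 1)) (getc m 2) (getc m 3)
  | 1 => fun h m => mk4 (getc h 0) (getc h 2) (getc h 3) (getc m 3)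
  | _ => fun _ _ => 0
  end.

Definition Redge (c : nat) (s : seq 'rV[R]_4) : 'rV[R]_1 :=
  \row_(x < 1) \sum_(v <- s) ((getc v 1 != 0) && (getc v 0 == 0))%:R * getc v c.
Definition Rnode (s : seq 'rV[R]_1) : 'rV[R]_1 := \row_(x < 1) \sum_(v <- s) v 0 0.

Lemma Redge_ms c : multiset_fun (Redge c).
Proof. by move=> s1 s2 Hp; apply/rowP => x; rewrite !mxE; apply: perm_big. Qed.
Lemma Rnode_ms : multiset_fun Rnode.
Proof. by move=> s1 s2 Hp; apply/rowP => x; rewrite !mxE; apply: perm_big. Qed.

Definition Net (c : nat) : I2GNN R dx de :=
  @MkI2GNN R dx de 4 isT 2 (fun _ => 4%N) (fun _ => 4%N) 1 1 Mf Uf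
    (Redge c) (@Redge_ms c) Rnode Rnode_ms.

Variables (c : nat) (G : graph R dx de) (i j : G).
Let N := Net c.
Definition Aj (k : G) : nat := \sum_(l in Ni N i k) (l == j).
Definition Wc (k : G) : nat := \sum_(l in Ni N i k) ((l != i) && (l != j)).

Lemma bnat0 (b : bool) : ((b%:R : R) == 0) = ~~ b.
Proof. by rewrite pnatr_eq0 eqb0. Qed.

Lemma h1E k : hnode N i j 1 k = mk4 (k == i)%:R (k == j)%:R (Aj k)%:R (Wc k)%:R.
Proof.
rewrite /= getc_h0a getc_h0b !getc_sum /Aj /Wc !natr_sum.
congr mk4; apply: eq_bigr => l _; rewrite getc_mk4 //= ?getc_h0a ?getc_h0b ?bnat0 //.
Qed.

Lemma h2E k :
  [/\ getc (hnode N i j 2 k) 0 = (k == i)%:R,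
      getc (hnode N i j 2 k) 1 = (Aj k)%:R,
      getc (hnode N i j 2 k) 2 = (Wc k)%:R &
      getc (hnode N i j 2 k) 3 = \sum_(l in Ni N i k)
         ((l != i) && (l != j))%:R * ((Wc l)%:R - ((k != i) && (k != j))%:R)].
Proof.
pose h1 := hnode N i j 1.
have E : hnode N i j 2 k = mk4 (getc (h1 k) 0) (getc (h1 k) 2) (getc (h1 k) 3)
   (getc (\sum_(l in Ni N i k) mk4 0 0 0
           (((getc (h1 l) 0 == 0) && (getc (h1 l) 1 == 0))%:R *
            (getc (h1 l) 3 - ((getc (h1 k) 0 == 0) && (getc (h1 k) 1 == 0))%:R))) 3) by [].
have H1 : forall l, h1 l = mk4 (l == i)%:R (l == j)%:R (Aj l)%:R (Wc l)%:R by move=> l; exact: h1E.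
clearbody h1; rewrite E H1 getc_sum !getc_mk4 //=; split => //.
apply: eq_bigr => l _; rewrite H1 !getc_mk4 //= !bnat0 //.
Qed.


Lemma sum_eqj (A : {pred G}) : (\sum_(l in A) (l == j) = (j \in A))%N.
Proof.
case: (boolP (j \in A)) => H.
  rewrite (bigD1 j) //= eqxx big1 // => l /andP[_ /negbTE ->] //.
by rewrite big1 // => l Hl; case: eqP => // e; rewrite -e Hl in H.
Qed.

Lemma hedgeE : hedge N i j = \row_(x < 1) \sum_(k in Vi N i)
   ((j \in Ni N i k) && (k != i))%:R * getc (hnode N i j 2 k) c.
Proof.
apply/rowP => x; rewrite /hedge /= !mxE big_map big_enum /=.
apply: eq_bigr => k _; have [e0 e1 _ _] := h2E k.
by rewrite e0 e1 bnat0 pnatr_eq0 /Aj sum_eqj eqb0 negbK.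
Qed.

Lemma S2E k : getc (hnode N i j 2 k) 3 =
  (\sum_(l in Ni N i k) ((l != i) && (l != j)) *
     \sum_(m in Ni N i l) [&& m != i, m != j & m != k])%:R.
Proof.
have [_ _ _ ->] := h2E k; rewrite natr_sum; apply: eq_bigr => l Hl.
rewrite natrM; congr (_ * _).
have Hk : k \in Ni N i l.
  by move: Hl; rewrite !inE => /and3P[-> -> /=]; rewrite gadj_sym.
rewrite /Wc (bigD1 k) //= natrD addrAC subrr add0r; congr (_%:R).
rewrite big_mkcondr /=; apply: eq_bigr => m _.
by case: (m != k); rewrite ?andbT ?andbF.
Qed.

Lemma outE :
  I2GNN_out (Net c) i = \row_(x < 1) \sum_(j in nbr i) (hedge (Net c) i j) 0 0.
Proof. by apply/rowP => x; rewrite /I2GNN_out /= !mxE big_map big_enum. Qed.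

End Net.

End P1.
Import P1.
Module P2.


Section Comb.
Variables (R : realType) (dx de : nat) (G : graph R dx de).

Lemma tnth_w L (p : L.+1.-tuple G) x0 (k : 'I_L) :
  tnth p (widen_ord (leqnSn L) k) = nth x0 p k.
Proof. by rewrite (tnth_nth x0). Qed.
Lemma tnth_l L (p : L.+1.-tuple G) x0 (k : 'I_L) :
  tnth p (lift ord0 k) = nth x0 p k.+1.
Proof. by rewrite (tnth_nth x0). Qed.

Lemma edge_in L (p : L.+1.-tuple G) x0 n : (n < L)%N ->
  [set nth x0 p n; nth x0 p n.+1] \in path_edges p.
Proof.
move=> Hn; apply/imsetP; exists (Ordinal Hn) => //.
by rewrite (tnth_w _ x0) (tnth_l _ x0).
Qed.

Lemma edge_of L (p : L.+1.-tuple G) x0 e : e \in path_edges p ->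
  exists2 a, (a < L)%N & e = [set nth x0 p a; nth x0 p a.+1].
Proof.
case/imsetP => k _ ->; exists (val k); first exact: ltn_ord.
  by rewrite (tnth_w _ x0) (tnth_l _ x0).
Qed.

Lemma path_inj L (i : G) (p q : L.+1.-tuple G) :
  is_Lpath i p -> is_Lpath i q -> path_edges p = path_edges q -> p = q.
Proof.
case/and3P => up p0 _ /and3P[uq q0 _] E.
have sp : size p = L.+1 by rewrite size_tuple.
have sq : size q = L.+1 by rewrite size_tuple.
have P0 : nth i p 0 = i by rewrite -(tnth_nth i p ord0); apply/eqP.
have Q0 : nth i q 0 = i by rewrite -(tnth_nth i q ord0); apply/eqP.
have key : forall n, (n <= L)%N -> forall m, (m <= n)%N -> nth i p m = nth i q m.
  elim=> [_ m|n IH Hn m Hm]; first by rewrite leqn0 => /eqP ->; rewrite P0 Q0.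
  have IH' := IH (ltnW Hn).
  rewrite leq_eqVlt in Hm; case/orP: Hm => [/eqP ->|Hm]; last by apply: IH'.
  have := @edge_in L p i n Hn; rewrite E => /(@edge_of L q i _) [a Ha Ea].
  have Pn := IH' n (leqnn n).
  have : nth i q n \in [set nth i q a; nth i q a.+1].
    by rewrite -Ea -Pn !inE eqxx.
  have uQ : forall x y, (x < L.+1)%N -> (y < L.+1)%N -> (nth i q x == nth i q y) = (x == y).
    by move=> x y Hx Hy; rewrite nth_uniq ?sq.
  have uP : forall x y, (x < L.+1)%N -> (y < L.+1)%N -> (nth i p x == nth i p y) = (x == y).
    by move=> x y Hx Hy; rewrite nth_uniq ?sp.
  have : nth i p n.+1 \in [set nth i q a; nth i q a.+1] by rewrite -Ea !inE eqxx orbT.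
  rewrite !inE !uQ; try lia.
  case/orP => /eqP Hx.
  - case/orP => /eqP Ha'.
    + subst a; move/eqP: Hx; rewrite -Pn uP; try lia.
    + subst n; move/eqP: Hx; rewrite -IH' // uP; try lia.
  - case/orP => /eqP Ha'; first by subst a.
    subst n; move/eqP: Hx; rewrite -Pn uP; try lia.
apply: val_inj; apply: (@eq_from_nth _ i); first by rewrite sp sq.
move=> m; rewrite sp ltnS => Hm; exact: (key L (leqnn L) m Hm).
Qed.


Lemma count_sum L (i : G) :
  Lpath_count L i = \sum_(p : L.+1.-tuple G) is_Lpath i p.
Proof.
rewrite /Lpath_count card_in_imset; last first.
  by move=> p q; rewrite !inE; apply: path_inj.
rewrite -sum1_card big_mkcond /=; apply: eq_bigr => p _.
by rewrite !inE; case: (is_Lpath i p).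
Qed.

Lemma sum_tupleS n (F : n.+1.-tuple G -> nat) :
  \sum_(p : n.+1.-tuple G) F p = \sum_(x : G) \sum_(q : n.-tuple G) F [tuple of x :: q].
Proof.
rewrite pair_big /=.
rewrite (reindex (fun pr : G * n.-tuple G => [tuple of pr.1 :: pr.2])) //=.
apply: onW_bij; exists (fun p : n.+1.-tuple G => (thead p, behead_tuple p)).
  by move=> [x q] /=; rewrite theadE; congr pair; apply: val_inj.
by move=> p /=; rewrite [RHS]tuple_eta.

Qed.

Lemma sum_tuple0 (F : 0.-tuple G -> nat) :
  \sum_(p : 0.-tuple G) F p = F [tuple].
Proof.
rewrite (eq_bigr (fun _ => F [tuple])) => [|q _]; last by rewrite tuple0.
by rewrite sum_nat_const card_tuple expn0 mul1n.
Qed.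


Lemma forall_iota L (P : pred nat) : [forall k : 'I_L, P k] = all P (iota 0 L).
Proof.
apply/forallP/allP => [H k | H k].
  by rewrite mem_iota add0n => /= Hk; exact: (H (Ordinal Hk)).
by apply: H; rewrite mem_iota add0n /=.
Qed.

Lemma isL_nth L (i : G) (p : L.+1.-tuple G) :
  is_Lpath i p = [&& uniq p, nth i p 0 == i &
     all (fun k => gadj (nth i p k) (nth i p k.+1)) (iota 0 L)].
Proof.
rewrite /is_Lpath (tnth_nth i) /=; congr [&& _, _ & _].
rewrite -(forall_iota L (fun k => gadj (nth i p k) (nth i p k.+1))).
by apply: eq_forallb => k; rewrite (tnth_w _ i) (tnth_l _ i).
Qed.

Lemma adj_neq (x y : G) : gadj x y -> (x == y) = false.
Proof. by move=> H; apply/eqP => e; rewrite e gadj_irr in H. Qed.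

Definition C3 (i : G) : nat := \sum_(b : G) \sum_(c : G) \sum_(d : G)
  [&& gadj i b, gadj b c, gadj c d, c != i, d != i & d != b].

Definition C4 (i : G) : nat := \sum_(b : G) \sum_(c : G) \sum_(d : G) \sum_(e : G)
  ([&& gadj i b, gadj b c, gadj c d, gadj d e, c != i, d != i & d != b] &&
   [&& e != i, e != b & e != c]).

Lemma sum_tuple4 (F : 4.-tuple G -> nat) :
  \sum_(p : 4.-tuple G) F p = \sum_a \sum_b \sum_c \sum_d F [tuple a; b; c; d].
Proof.
rewrite sum_tupleS; apply: eq_bigr => a _; rewrite sum_tupleS; apply: eq_bigr => b _.
rewrite sum_tupleS; apply: eq_bigr => c _; rewrite sum_tupleS; apply: eq_bigr => d _.
by rewrite sum_tuple0.
Qed.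

Lemma sum_tuple5 (F : 5.-tuple G -> nat) :
  \sum_(p : 5.-tuple G) F p = \sum_a \sum_b \sum_c \sum_d \sum_e F [tuple a; b; c; d; e].
Proof.
rewrite sum_tupleS; apply: eq_bigr => a _; rewrite sum_tupleS; apply: eq_bigr => b _.
rewrite sum_tupleS; apply: eq_bigr => c _; rewrite sum_tupleS; apply: eq_bigr => d _.
rewrite sum_tupleS; apply: eq_bigr => e _.
by rewrite sum_tuple0.
Qed.

Lemma count3 (i : G) : Lpath_count 3 i = C3 i.
Proof.
rewrite count_sum sum_tuple4.
rewrite (bigD1 i) //= [X in (_ + X)%N]big1 ?addn0 => [|a Ha]; last first.
  by do 3!(apply: big1 => ? _); rewrite isL_nth /= (negbTE Ha) andbF.
apply: eq_bigr => b _; apply: eq_bigr => c _; apply: eq_bigr => d _.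
rewrite isL_nth /= !inE eqxx.
rewrite ?[b == i]eq_sym ?[c == i]eq_sym ?[d == i]eq_sym ?[c == b]eq_sym ?[d == b]eq_sym ?[d == c]eq_sym.
case Hib: (gadj i b); last by rewrite /= !andbF.
case Hbc: (gadj b c); last by rewrite /= !andbF.
case Hcd: (gadj c d); last by rewrite /= !andbF.
rewrite (adj_neq Hib) (adj_neq Hbc) (adj_neq Hcd).
by case: (i == c); case: (i == d); case: (b == d).
Qed.

Lemma count4 (i : G) : Lpath_count 4 i = C4 i.
Proof.
rewrite count_sum sum_tuple5.
rewrite (bigD1 i) //= [X in (_ + X)%N]big1 ?addn0 => [|a Ha]; last first.
  by do 4!(apply: big1 => ? _); rewrite isL_nth /= (negbTE Ha) andbF.
apply: eq_bigr => b _; apply: eq_bigr => c _; apply: eq_bigr => d _; apply: eq_bigr => e _.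
rewrite isL_nth /= !inE eqxx.
rewrite ?[b == i]eq_sym ?[c == i]eq_sym ?[d == i]eq_sym ?[e == i]eq_sym.
rewrite ?[c == b]eq_sym ?[d == b]eq_sym ?[e == b]eq_sym ?[d == c]eq_sym ?[e == c]eq_sym ?[e == d]eq_sym.
case Hib: (gadj i b); last by rewrite /= !andbF.
case Hbc: (gadj b c); last by rewrite /= !andbF.
case Hcd: (gadj c d); last by rewrite /= !andbF.
case Hde: (gadj d e); last by rewrite /= !andbF.
rewrite (adj_neq Hib) (adj_neq Hbc) (adj_neq Hcd) (adj_neq Hde).
by case: (i == c); case: (i == d); case: (i == e); case: (b == d); case: (b == e); case: (c == e).
Qed.

End Comb.
End P2.
Import P2.
Module P3.


Section Balls.
Variables (R : realType) (dx de : nat) (G : graph R dx de) (i : G).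

Lemma ball_sub n m : (n <= m)%N -> ball i n \subset ball i m.
Proof.
elim: m => [|m IH]; first by rewrite leqn0 => /eqP ->.
rewrite leq_eqVlt => /orP[/eqP -> //| Hn].
apply: subset_trans (IH Hn) _; exact: subsetUl.
Qed.

Lemma ball_adj n u v : u \in ball i n -> gadj u v -> v \in ball i n.+1.
Proof. by move=> Hu Huv; rewrite /= in_setU inE; apply/orP; right; apply/existsP; exists u; rewrite Hu. Qed.

Lemma ball_self n : i \in ball i n.
Proof. by elim: n => [|n IH] /=; rewrite ?inE ?IH. Qed.

Lemma ball_le n m u : (n <= m)%N -> u \in ball i n -> u \in ball i m.
Proof. by move=> H; apply/subsetP/ball_sub. Qed.

Variable c : nat.
Notation NN := (Net R dx de c).

Lemma Vi_ball : Vi NN i = ball i 4. Proof. by []. Qed.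

Lemma Ni_in k l : (l \in Ni NN i k) = [&& l \in ball i 4, k \in ball i 4 & gadj k l].
Proof. by rewrite /Ni in_set. Qed.

Lemma nbr_in j : (j \in nbr i) = gadj i j.
Proof. by rewrite /nbr in_set. Qed.

Lemma Ni_ball k l : k \in ball i 3 -> (l \in Ni NN i k) = gadj k l.
Proof.
move=> Hk; rewrite Ni_in (@ball_le 3 4 k) //.
case H: (gadj k l); last by rewrite !andbF.
by rewrite (ball_adj Hk H).
Qed.

Lemma step_j (F : G -> G -> nat) :
  (\sum_(j in nbr i) \sum_(k in Vi NN i) ((j \in Ni NN i k) && (k != i)) * F j k =
   \sum_j \sum_k (gadj i j && gadj j k && (k != i)) * F j k)%N.
Proof.
rewrite big_mkcond; apply: eq_bigr => j _; rewrite nbr_in.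
case Hij: (gadj i j); last by rewrite big1.
rewrite big_mkcond; apply: eq_bigr => k _.
have Hj1 : j \in ball i 1 by apply: (ball_adj (ball_self 0)).
case Hjk: (gadj j k).
  have Hk2 : k \in ball i 2 by apply: (ball_adj Hj1).
  rewrite Vi_ball (ball_le (n := 2)) // Ni_in (ball_le (n := 1)) //.
  by rewrite (ball_le (n := 2)) // gadj_sym Hjk.
case: ifP => // _; rewrite Ni_in gadj_sym Hjk !andbF //.
Qed.

Lemma GN3 :
  (\sum_(j in nbr i) \sum_(k in Vi NN i) ((j \in Ni NN i k) && (k != i)) * Wc c i j k)%N
  = C3 i.
Proof.
rewrite step_j /C3; apply: eq_bigr => j _; apply: eq_bigr => k _.
case Hij: (gadj i j); last by rewrite /= mul0n big1.
case Hjk: (gadj j k); last by rewrite /= mul0n big1.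
have Hk2 : k \in ball i 2 by apply: (ball_adj (ball_adj (ball_self 0) Hij)).
rewrite /Wc big_mkcond big_distrr /=; apply: eq_bigr => l _.
have Hk3 : k \in ball i 3 by apply: (ball_le _ Hk2).
rewrite (Ni_ball l Hk3).
by case: (k != i); case: (gadj k l); case: (l != i); case: (l != j).
Qed.

Lemma GN4 :
  (\sum_(j in nbr i) \sum_(k in Vi NN i) ((j \in Ni NN i k) && (k != i)) *
     \sum_(l in Ni NN i k) ((l != i) && (l != j)) *
     \sum_(m in Ni NN i l) [&& m != i, m != j & m != k])%N
  = C4 i.
Proof.
rewrite step_j /C4; apply: eq_bigr => j _; apply: eq_bigr => k _.
case Hij: (gadj i j); last by rewrite /= mul0n big1 // => l _; rewrite big1.
case Hjk: (gadj j k); last by rewrite /= mul0n big1 // => l _; rewrite big1.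
have Hk2 : k \in ball i 2 by apply: (ball_adj (ball_adj (ball_self 0) Hij)).
rewrite big_mkcond big_distrr /=; apply: eq_bigr => l _.
have Hk3 : k \in ball i 3 by apply: (ball_le _ Hk2).
rewrite (Ni_ball l Hk3).
case Hkl: (gadj k l); last by rewrite /= !muln0 big1 // => m _; rewrite andbF.
have Hl3 : l \in ball i 3 by apply: (ball_adj Hk2).
rewrite big_mkcond big_distrr /= big_distrr /=; apply: eq_bigr => m _.
rewrite (Ni_ball m Hl3).
by case: (k != i); case: (l != i); case: (l != j); case: (gadj l m);
   case: (m != i); case: (m != j); case: (m != k).
Qed.

End Balls.
End P3.
Import P3.

Section Final.
Variables (R : realType) (dx de : nat).
Local Open Scope ring_scope.
Import Order.TTheory GRing.Theory Num.Theory.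

Lemma out3 (G : graph R dx de) (i : G) :
  I2GNN_out (Net R dx de 2) i 0 0 = (Lpath_count 3 i)%:R.
Proof.
rewrite outE mxE count3 -(GN3 i 2) natr_sum; apply: eq_bigr => j _.
rewrite hedgeE mxE natr_sum; apply: eq_bigr => k _.
by rewrite natrM; have [_ _ -> _] := h2E 2 i j k.
Qed.

Lemma out4 (G : graph R dx de) (i : G) :
  I2GNN_out (Net R dx de 3) i 0 0 = (Lpath_count 4 i)%:R.
Proof.
rewrite outE mxE count4 -(GN4 i 3) natr_sum; apply: eq_bigr => j _.
rewrite hedgeE mxE natr_sum; apply: eq_bigr => k _.
by rewrite natrM S2E.
Qed.

End Final.

Theorem theorem4 (R : realType) (dx de : nat) (L : nat) :
  (L = 3 \/ L = 4)%N ->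
  forall (G1 : graph R dx de) (i1 : G1) (G2 : graph R dx de) (i2 : G2),
    Lpath_count L i1 <> Lpath_count L i2 ->
    exists N : I2GNN R dx de, I2GNN_out N i1 <> I2GNN_out N i2.
Proof.
case=> -> G1 i1 G2 i2 Hne.
  exists (Net R dx de 2) => E; apply: Hne.
  have := congr1 (fun M : 'rV[R]_1 => M 0%R 0%R) E; rewrite /= !out3 => /eqP.
  by rewrite Num.Theory.eqr_nat => /eqP.
exists (Net R dx de 3) => E; apply: Hne.
have := congr1 (fun M : 'rV[R]_1 => M 0%R 0%R) E; rewrite /= !out4 => /eqP.
by rewrite Num.Theory.eqr_nat => /eqP.
Qed.
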